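(* Let $N$ and $N_k$ be integers with $1\le N_k\le N$. For a vector $\boldsymbol{\zeta}_k=(\boldsymbol{\zeta}_k[1],\dots,\boldsymbol{\zeta}_k[N_k])$ of $N_k$ pairwise distinct elements of $\{1,\dots,N\}$, define its variance $$\bar{\boldsymbol\zeta}_k=\frac{1}{N_k}\sum_{n=1}^{N_k}\boldsymbol{\zeta}_k[n]^2-\frac{1}{N_k^2}\Big[\sum_{n=1}^{N_k}\boldsymbol{\zeta}_k[n]\Big]^2 .$$ Then, over all such vectors, $\bar{\boldsymbol\zeta}_k$ is maximized, and consequently the range Cramér–Rao bound $$\mathrm{CRB}(R)=\frac{c^2\sigma^2}{8|\beta|^2\pi^2 G_k N_k\Delta f^2\,\bar{\boldsymbol\zeta}_k}$$ is minimized, when the subcarriers are assigned according to the edge-first distribution.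
   Context: Here $c,\sigma,|\beta|,G_k,\Delta f$ are fixed positive constants (speed of light, noise standard deviation, magnitude of the path gain, number of sensing symbols, subcarrier spacing), so minimizing $\mathrm{CRB}(R)$ is equivalent to maximizing $\bar{\boldsymbol\zeta}_k$. The entries $\boldsymbol{\zeta}_k[n]$ are the indices of the subcarriers assigned to the user. The edge-first distribution is the one in which subcarriers nearest the two edges of the index range $\{1,\dots,N\}$ are preferentially assigned, i.e. the set of assigned indices is $\{1,\dots,a\}\cup\{N-b+1,\dots,N\}$ with $a+b=N_k$ and $|a-b|\le 1$ (e.g. for $N=48$, $N_k=16$: indices $1,\dots,8,41,\dots,48$). *)

(* Defs.v *)
From HB Require Import structures.
From mathcomp Require Import all_boot all_order all_algebra.
From mathcomp Require Import reals trigo.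
Unset Printing Implicit Defensive.
Import Order.TTheory GRing.Theory Num.Theory.
Local Open Scope ring_scope.

(* A subcarrier assignment vector zeta_k of length Nk: entry i (0-based index,
   i.e. zeta_k[i+1] in the paper) is a subcarrier index in {1..N}. *)
Definition valid_assign (N Nk : nat) (z : 'I_Nk -> nat) : Prop :=
  injective z /\ (forall i, (1 <= z i <= N)%N).

Definition zvar (R : realFieldType) (Nk : nat) (z : 'I_Nk -> nat) : R :=
  (\sum_i ((z i)%:R : R) ^+ 2) / Nk%:R
  - (\sum_i ((z i)%:R : R)) ^+ 2 / (Nk%:R ^+ 2).

Definition edge_first (N Nk a : nat) : 'I_Nk -> nat :=
  fun i => if (i < a)%N then (i.+1)%N else (N - Nk + i.+1)%N.

Definition CRB (R : realType) (c sigma beta G df : R) (Nk : nat) (zbar : R) : R :=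
  (c ^+ 2 * sigma ^+ 2) / (8 * beta ^+ 2 * pi ^+ 2 * G * Nk%:R * df ^+ 2 * zbar).

(* Main.v *)
Require Import Defs.
From HB Require Import structures.
From mathcomp Require Import all_boot all_order all_algebra.
From mathcomp Require Import reals trigo.
From mathcomp Require Import ring lra zify.
Import Order.TTheory GRing.Theory Num.Theory.
Local Open Scope ring_scope.


Definition Dv {R : realFieldType} {n} (f : 'I_n -> R) : R :=
  n%:R * \sum_i f i ^+ 2 - (\sum_i f i) ^+ 2.
Definition Bv {R : realFieldType} {n} (f g : 'I_n -> R) : R :=
  n%:R * \sum_i (f i * g i) - (\sum_i f i) * (\sum_i g i).

Lemma Dpair (R : realFieldType) n (f : 'I_n -> R) :
  2 * Dv f = \sum_i \sum_j (f i - f j) ^+ 2.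
Proof.
rewrite /Dv.
have inner : forall i, \sum_j (f i - f j) ^+ 2 =
   n%:R * f i ^+ 2 - 2 * f i * \sum_j f j + \sum_j f j ^+ 2.
  move=> i; under eq_bigr => j _ do rewrite sqrrB.
  rewrite big_split /= sumrB sumr_const card_ord sumrMnl -mulr_sumr.
  rewrite -mulr_natl -[_ *+ 2]mulr_natl. ring.
rewrite (eq_bigr _ (fun i _ => inner i)).
rewrite big_split /= sumrB -mulr_sumr -mulr_suml -mulr_sumr.
rewrite sumr_const card_ord -mulr_natl. ring.
Qed.

Lemma DaddE (R : realFieldType) n (f g : 'I_n -> R) :
  Dv (fun i => f i + g i) = Dv f + 2 * Bv f g + Dv g.
Proof.
rewrite /Dv /Bv.
under eq_bigr => i _ do rewrite sqrrD.
rewrite !big_split /=.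
ring.
Qed.

Lemma sum_id (R : realFieldType) n :
  2 * \sum_(i < n) (i%:R : R) = n%:R * (n%:R - 1).
Proof.
elim: n => [|n IH]; first by rewrite big_ord0; ring.
rewrite big_ord_recr /= mulrDr IH -natr1. ring.
Qed.


Lemma nat_bal (a b c : nat) : (a <= b.+1)%N -> (b <= a.+1)%N ->
  (c * (a + b) <= a * b + c * c)%N.
Proof.
move=> h1 h2.
have [hca|hca] := leqP c a; have [hcb|hcb] := leqP c b; nia.
Qed.

Lemma D01 (R : realFieldType) a b (h1 : (a <= b.+1)%N) (h2 : (b <= a.+1)%N)
  (x : 'I_(a+b) -> bool) : Dv (fun i => ((x i)%:R : R)) <= (a*b)%:R.
Proof.
rewrite /Dv.
have -> : \sum_i ((x i)%:R : R) ^+ 2 = \sum_i ((x i)%:R : R).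
  by apply: eq_bigr => i _; case: (x i); rewrite ?expr1n ?expr0n.
rewrite -natr_sum.
set c := (\sum_i x i)%N.
have H : ((c * (a + b))%:R <= (a * b + c * c)%:R :> R) by rewrite ler_nat nat_bal.
rewrite !natrM !natrD in H *.
rewrite expr2. lra.
Qed.

Lemma Dbound (R : realFieldType) a b (h1 : (a <= b.+1)%N) (h2 : (b <= a.+1)%N) K :
  forall L (f : 'I_(a+b) -> nat), (forall i, (L <= f i <= L + K)%N) ->
  Dv (fun i => ((f i)%:R : R)) <= (a*b)%:R * K%:R ^+ 2.
Proof.
elim: K => [|K IH] L f hf.
  have e := @Dpair R _ (fun i => ((f i)%:R : R)).
  rewrite big1 in e; last first.
    move=> i _; apply: big1 => j _.
    have -> : f i = L by have := hf i; lia.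
    have -> : f j = L by have := hf j; lia.
    by rewrite subrr expr0n.
  rewrite expr0n /= mulr0. lra.
pose x i := (L < f i)%N.
pose u i := (f i - x i)%N.
have hu : forall i, (L <= u i <= L + K)%N.
  move=> i; rewrite /u /x; have := hf i; case: ltnP => /=; lia.
have hfx : forall i, ((f i)%:R : R) = (x i)%:R + (u i)%:R.
  move=> i; rewrite -natrD; congr (_%:R); rewrite /u /x.
  have := hf i; case: ltnP => /=; lia.
have Du := IH L u hu.
have Dx := @D01 R a b h1 h2 x.
have e : 2 * Dv (fun i => ((f i)%:R : R)) =
   \sum_i \sum_j ((((x i)%:R : R) - (x j)%:R) + ((u i)%:R - (u j)%:R)) ^+ 2.
  rewrite Dpair; apply: eq_bigr => i _; apply: eq_bigr => j _.
  rewrite !hfx; congr (_ ^+ 2); ring.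
have ex := @Dpair R _ (fun i => ((x i)%:R : R)).
have eu := @Dpair R _ (fun i => ((u i)%:R : R)).
case: (posnP K) => [K0|Kpos].
  subst K.
  have : 2 * Dv (fun i => ((f i)%:R : R)) = 2 * Dv (fun i => ((x i)%:R : R)).
    rewrite e ex; apply: eq_bigr => i _; apply: eq_bigr => j _.
    have -> : u i = L by have := hu i; lia.
    have -> : u j = L by have := hu j; lia.
    by rewrite subrr addr0.
  rewrite expr1n mulr1. lra.
have Kr : (0 : R) < K%:R by rewrite ltr0n.
have main : K%:R * (2 * Dv (fun i => ((f i)%:R : R))) <=
   K%:R * (K%:R + 1) * (2 * Dv (fun i => ((x i)%:R : R)))
   + (K%:R + 1) * (2 * Dv (fun i => ((u i)%:R : R))).
  rewrite e ex eu !mulr_sumr -big_split /=; apply: ler_sum => i _.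
  rewrite !mulr_sumr -big_split /=; apply: ler_sum => j _.
  set p := (_ - _ : R); set q := (_ - _ : R).
  have hh := sqr_ge0 (K%:R * p - q). nra.
have Dx' : K%:R * (K%:R + 1) * Dv (fun i => ((x i)%:R : R)) <= K%:R * (K%:R + 1) * (a*b)%:R.
  apply: ler_wpM2l => //; nra.
have Du' : (K%:R + 1) * Dv (fun i => ((u i)%:R : R)) <= (K%:R + 1) * ((a*b)%:R * K%:R ^+ 2).
  apply: ler_wpM2l => //; nra.
rewrite -natr1.
rewrite -(ler_pM2l Kr).
nra.
Qed.

Local Open Scope nat_scope.

Lemma card_vals n (z : 'I_n -> nat) (A : {pred 'I_n}) lo k :
  injective z -> (forall j, j \in A -> lo <= z j < lo + k) -> #|A| <= k.
Proof.
move=> zi hA.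
rewrite cardE -(size_map z) -[k](size_iota lo).
apply: uniq_leq_size.
  by rewrite (map_inj_uniq zi) enum_uniq.
move=> v /mapP [j]; rewrite mem_enum => /hA hj ->.
by rewrite mem_iota.
Qed.

Lemma rank_ex n N (z : 'I_n -> nat) : injective z -> (forall i, 1 <= z i <= N) ->
  exists r : 'I_n -> 'I_n, injective r /\
    forall i, r i < z i /\ z i + n <= N + r i + 1.
Proof.
move=> zi hz.
pose A i := [pred j | z j < z i].
pose C i := [pred j | z j <= z i].
have cC : forall i, #|C i| = #|A i|.+1.
  move=> i; rewrite (cardD1 i) inE leqnn add1n; congr _.+1.
  apply: eq_card => j; rewrite !inE.
  case: (eqVneq j i) => [->|ne] /=; first by rewrite ltnn.
  case: (ltngtP (z j) (z i)) => // e.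
  by move: ne; rewrite (zi _ _ e) eqxx.
have Alt : forall i, #|A i| < n.
  by move=> i; have := max_card (C i); rewrite cC card_ord.
exists (fun i => Ordinal (Alt i)); split.
  move=> i j /(congr1 val) /= e.
  have sub : forall i j, z i < z j -> #|A i| < #|A j|.
    move=> i' j' h; rewrite -cC; apply: subset_leq_card.
    by apply/subsetP => k; rewrite !inE => hk; apply: leq_ltn_trans hk h.
  case: (ltngtP (z i) (z j)) => h; last by apply: zi.
    by have := sub _ _ h; rewrite e ltnn.
  by have := sub _ _ h; rewrite e ltnn.
move=> i /=; split.
  have := @card_vals n z (A i) 1 (z i - 1) zi.
  have := hz i => hi h; suff : #|A i| <= z i - 1 by lia.
  apply: h => j; rewrite inE => hj; have := hz j; lia.
pose B := [pred j | z i < z j].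
have cB : #|B| <= N - z i.
  apply: (@card_vals n z B (z i).+1) => // j; rewrite inE => hj.
  have := hz j; have := hz i; lia.
have := cardC (C i); rewrite card_ord cC.
have -> : #|[predC C i]| = #|B|.
  by apply: eq_card => j; rewrite !inE -ltnNge.
have := hz i; lia.
Qed.

Local Open Scope ring_scope.



Lemma Dv_ext (R : realFieldType) n (f g : 'I_n -> R) :
  (forall i, f i = g i) -> Dv f = Dv g.
Proof. by move=> h; rewrite /Dv; congr (_ - _); [congr (_ * _)|congr (_ ^+ 2)];
  apply: eq_bigr => i _; rewrite h. Qed.

Lemma Bv_form (R : realFieldType) n (f g : 'I_n -> R) S :
  \sum_i f i = S -> Bv f g = \sum_i g i * (n%:R * f i - S).
Proof.
move=> hS; rewrite /Bv hS !mulr_sumr -sumrB.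
by apply: eq_bigr => i _; ring.
Qed.



Arguments Bv_form {R n f} g {S}.
Lemma core (R : realFieldType) a b M (h1 : (a <= b.+1)%N) (h2 : (b <= a.+1)%N)
  (hM : (1 <= M)%N) (r : 'I_(a+b) -> 'I_(a+b)) (hr : injective r)
  (y : 'I_(a+b) -> nat) (hy : forall i, (1 <= y i <= M)%N) :
  Dv (fun i => (((r i : nat) + y i)%N)%:R : R) <=
  Dv (fun i : 'I_(a+b) => (((i : nat) + (if (i < a)%N then 1 else M))%N)%:R : R).
Proof.
pose e (k : nat) := if (k < a)%N then 1%N else M.
rewrite (@Dv_ext R _ _ (fun i => ((r i : nat)%:R : R) + (y i)%:R)); last by move=> i /=; rewrite natrD.
rewrite [X in _ <= X](@Dv_ext R _ _ (fun i : 'I_(a+b) => ((i : nat)%:R : R) + (e i)%:R)); last by move=> i /=; rewrite natrD.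
rewrite !DaddE.
have d1 : Dv (fun i => ((r i : nat)%:R : R)) = Dv (fun i : 'I_(a+b) => ((i : nat)%:R : R)).
  rewrite /Dv; congr (_ - _); [congr (_ * _)|congr (_ ^+ 2)].
    by rewrite [RHS](reindex_inj hr).
  by rewrite [RHS](reindex_inj hr).
set S := \sum_(k < a + b) ((k : nat)%:R : R).
have hS : 2 * S = (a+b)%:R * ((a+b)%:R - 1) by rewrite /S sum_id.
have sr : \sum_i ((r i : nat)%:R : R) = S by rewrite /S [RHS](reindex_inj hr).
have d2 : Bv (fun i => ((r i : nat)%:R : R)) (fun i => (y i)%:R) <=
          Bv (fun i : 'I_(a+b) => ((i : nat)%:R : R)) (fun i => (e i)%:R).
  rewrite (Bv_form _ sr) (Bv_form _ (erefl S)).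
  rewrite [X in _ <= X](reindex_inj hr).
  apply: ler_sum => i _.
  set k := (r i : nat).
  have n0 : 0 <= (a+b)%:R :> R := ler0n _ _.
  have kn : (k < a + b)%N by rewrite /k ltn_ord.
  have hyi := hy i; rewrite /e; case: (ltnP k a) => hk.
    have hk2 : ((2 * k + 1)%:R <= (a + b)%:R :> R).
      rewrite ler_nat; lia.
    have hy1 : (1 <= (y i)%:R :> R) by rewrite ler1n; lia.
    rewrite (natrD _ (2*k)) natrM in hk2.
    have neg : (a+b)%:R * k%:R - S <= 0 by nra.
    rewrite mul1r; nra.
  have hk2 : ((a + b)%:R <= (2 * k + 1)%:R :> R) by rewrite ler_nat; lia.
  have hyM : ((y i)%:R <= M%:R :> R) by rewrite ler_nat; lia.
  rewrite (natrD _ (2*k)) natrM in hk2.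
  have pos : 0 <= (a+b)%:R * k%:R - S by nra.
  nra.
have d3 : Dv (fun i : 'I_(a+b) => ((y i)%:R : R)) <= (a*b)%:R * (M%:R - 1) ^+ 2.
  have := @Dbound R a b h1 h2 (M - 1) 1 y.
  rewrite natrB // => -> // i; have := hy i; lia.
have d4 : Dv (fun i : 'I_(a+b) => ((e i)%:R : R)) = (a*b)%:R * (M%:R - 1) ^+ 2.
  have el : forall i : 'I_a, e i = 1%N by move=> i; rewrite /e /= ltn_ord.
  have er : forall i : 'I_b, e (a + i)%N = M by move=> i; rewrite /e /= ltnNge leq_addr.
  have s1 : \sum_(i < a+b) ((e i)%:R : R) = a%:R + b%:R * M%:R.
    rewrite big_split_ord /= (eq_bigr (fun _ => 1)); last by move=> i _; rewrite el.
    rewrite [X in _ + X](eq_bigr (fun _ => M%:R)); last by move=> i _; rewrite er.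
    by rewrite !sumr_const !card_ord mulr_natl.
  have s2 : \sum_(i < a+b) ((e i)%:R : R) ^+ 2 = a%:R + b%:R * M%:R ^+ 2.
    rewrite big_split_ord /= (eq_bigr (fun _ => 1)); last by move=> i _; rewrite el expr1n.
    rewrite [X in _ + X](eq_bigr (fun _ => M%:R ^+ 2)); last by move=> i _; rewrite er.
    by rewrite !sumr_const !card_ord mulr_natl.
  rewrite /Dv s1 s2 natrD natrM. ring.
rewrite d1 d4. lra.
Qed.


Lemma zvarE (R : realFieldType) n (z : 'I_n -> nat) : (0 < n)%N ->
  zvar R n z = Dv (fun i => ((z i)%:R : R)) / (n%:R ^+ 2).
Proof.
move=> n0; have nz : (n%:R : R) != 0 by rewrite pnatr_eq0 -lt0n.
rewrite /zvar /Dv; field; exact: nz.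
Qed.

Lemma Dv_pos (R : realFieldType) n (z : 'I_n -> nat) : (1 < n)%N -> injective z ->
  0 < Dv (fun i => ((z i)%:R : R)).
Proof.
move=> n1 zi.
have h0 : (0 < n)%N by lia.
pose i0 := Ordinal h0. pose i1 := Ordinal n1.
have ne : z i0 != z i1 by apply/eqP => /zi /(congr1 val).
have e := @Dpair R _ (fun i => ((z i)%:R : R)).
suff : 0 < \sum_i \sum_j (((z i)%:R : R) - (z j)%:R) ^+ 2 by lra.
rewrite (bigD1 i0) //=.
apply: (@lt_le_trans _ _ (\sum_j (((z i0)%:R : R) - (z j)%:R) ^+ 2)).
  rewrite (bigD1 i1) //=.
  apply: (@lt_le_trans _ _ ((((z i0)%:R : R) - (z i1)%:R) ^+ 2)).
    rewrite exprn_even_gt0 // subr_eq0 eqr_nat. exact: ne.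
  rewrite lerDl; apply: sumr_ge0 => j _; exact: sqr_ge0.
rewrite lerDl; apply: sumr_ge0 => j _; apply: sumr_ge0 => k _; exact: sqr_ge0.
Qed.

Theorem proposition2 (R : realType) (N Nk a b : nat)
  (hNk : (1 <= Nk <= N)%N) (hab : (a + b)%N = Nk)
  (hbal : (a <= b.+1)%N /\ (b <= a.+1)%N)
  (c sigma beta G df : R)
  (hc : 0 < c) (hs : 0 < sigma) (hb : 0 < beta) (hG : 0 < G) (hdf : 0 < df) :
  valid_assign N Nk (edge_first N Nk a) /\
  (forall z : 'I_Nk -> nat, valid_assign N Nk z ->
     zvar R Nk z <= zvar R Nk (edge_first N Nk a)) /\
  (forall z : 'I_Nk -> nat, valid_assign N Nk z ->
     CRB R c sigma beta G df Nk (zvar R Nk (edge_first N Nk a))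
     <= CRB R c sigma beta G df Nk (zvar R Nk z)).
Proof.
subst Nk; case: hbal => h1 h2.
have n0 : (0 < a + b)%N by lia.
have valid : valid_assign N (a + b) (edge_first N (a + b) a).
  split.
    move=> i j; rewrite /edge_first => e; apply: val_inj => /=.
    have := ltn_ord i; have := ltn_ord j.
    move: e; case: (ltnP i a); case: (ltnP j a); lia.
  move=> i; rewrite /edge_first; have := ltn_ord i; case: (ltnP i a); lia.
set M := (N - (a + b) + 1)%N.
have edgeE : forall i : 'I_(a+b), edge_first N (a + b) a i = ((i : nat) + (if (i < a)%N then 1 else M))%N.
  move=> i; rewrite /edge_first /M; have := ltn_ord i; case: (ltnP i a); lia.
have main : forall z : 'I_(a+b) -> nat, valid_assign N (a + b) z ->
    Dv (fun i => ((z i)%:R : R)) <= Dv (fun i => ((edge_first N (a + b) a i)%:R : R)).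
  move=> z [zi zb].
  have [r [ri rb]] := @rank_ex _ N z zi zb.
  pose y i := (z i - r i)%N.
  rewrite (@Dv_ext R _ _ (fun i => ((((r i : nat) + y i)%N)%:R : R))); last first.
    by move=> i; rewrite /y; congr (_%:R); have := rb i; lia.
  rewrite [X in _ <= X](@Dv_ext R _ _ (fun i : 'I_(a+b) => ((((i : nat) + (if (i < a)%N then 1 else M))%N)%:R : R))); last first.
    by move=> i; rewrite edgeE.
  apply: core => //; first by rewrite /M; lia.
  move=> i; rewrite /y /M; have := rb i; have := zb i; lia.
have nR : (0 : R) < (a + b)%:R ^+ 2 by rewrite exprn_gt0 // ltr0n.
have zle : forall z : 'I_(a+b) -> nat, valid_assign N (a + b) z ->
     zvar R (a + b) z <= zvar R (a + b) (edge_first N (a + b) a).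
  move=> z hz; rewrite !zvarE //; apply: ler_wpM2r; last exact: main.
  by rewrite invr_ge0 ltW.
split => //; split => // z hz.
have le := zle z hz.
case: (ltnP 1 (a + b)) => n1; last first.
  have e1 : forall f : 'I_(a+b) -> nat, zvar R (a + b) f = 0.
    move=> f; rewrite zvarE //.
    have e := @Dpair R _ (fun i => ((f i)%:R : R)).
    rewrite big1 in e; last first.
      move=> i _; apply: big1 => j _.
      have -> : i = j by apply: ord_inj; have := ltn_ord i; have := ltn_ord j; lia.
      by rewrite subrr expr0n.
    have -> : Dv (fun i => ((f i)%:R : R)) = 0 by lra.
    by rewrite mul0r.
  by rewrite !e1.
have vz : 0 < zvar R (a + b) z.
  rewrite zvarE //; apply: divr_gt0 => //; apply: Dv_pos => //; by case: hz.
set P := 8 * beta ^+ 2 * pi ^+ 2 * G * (a + b)%:R * df ^+ 2.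
have Pp : 0 < P.
  rewrite /P; repeat apply: mulr_gt0 => //; rewrite ?exprn_gt0 ?ltr0n ?pi_gt0 //.
rewrite /CRB -/P.
have K0 : 0 <= c ^+ 2 * sigma ^+ 2 by rewrite mulr_ge0 // exprn_ge0 // ltW.
apply: ler_wpM2l => //.
have ve : 0 < zvar R (a + b) (edge_first N (a + b) a) by apply: lt_le_trans le.
rewrite lef_pV2 ?posrE ?(mulr_gt0 Pp) //.
by rewrite ler_wpM2l // ltW.
Qed.
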